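(* Let $T:\mathbb{R}^d\to\mathbb{R}^d$ be nonexpansive with respect to a norm $\|\cdot\|$ on $\mathbb{R}^d$, with $\operatorname{Fix}T\neq\emptyset$. Let $(\beta_n)_{n\ge1}\subseteq(0,1)$ be nondecreasing with $\lim_n\beta_n=1$, let $x^0\in\mathbb{R}^d$, and let $(x^n)_{n\ge1}$ be generated by $x^n=(1-\beta_n)x^0+\beta_n(Tx^{n-1}+U_n)$, $n\ge1$, where $(U_n)$ are random vectors with $\mathbb{E}(U_n)=0$ and $\sigma_n:=\mathbb{E}(\|U_n\|)<\infty$. Then: (i) If there is $M>0$ with $\|Tx\|\le M$ for all $x\in\mathbb{R}^d$, then $\sup_{n\ge0}\mathbb{E}(\|Tx^n-x^0\|)\le M+\|x^0\|$. (ii) If $S:=\sup_{n\ge1}\sum_{i=1}^n B_i^n\sigma_i<+\infty$, then $\sup_{n\ge0}\mathbb{E}(\|Tx^n-x^0\|)\le 2\operatorname{dist}(x^0,\operatorname{Fix}T)+S$. In particular, if $\sum_n\sigma_n<+\infty$ then $\sup_{n\ge0}\mathbb{E}(\|Tx^n-x^0\|)<+\infty$.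
   Context: Notation: $B_i^n:=\prod_{j=i}^n\beta_j$ (with $B_i^n=1$ if $i>n$). $\operatorname{dist}(x^0,\operatorname{Fix}T)=\inf_{x^*\in\operatorname{Fix}T}\|x^0-x^*\|$. *)

(* Defs.v *)
From HB Require Import structures.
From mathcomp Require Import all_boot all_order all_algebra.
From mathcomp Require Import all_classical all_reals all_analysis.
Set Implicit Arguments. Unset Strict Implicit. Unset Printing Implicit Defensive.
Import Order.TTheory GRing.Theory Num.Theory.
Import numFieldNormedType.Exports.
Local Open Scope classical_set_scope.
Local Open Scope ring_scope.

Definition is_norm (R : realType) (d : nat) (N : 'rV[R]_d -> R) : Prop :=
  [/\ (forall x, N x = 0 -> x = 0),
      (forall (a : R) x, N (a *: x) = `|a| * N x) &
      (forall x y, N (x + y) <= N x + N y)].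

Definition nonexpansive (R : realType) (d : nat) (N : 'rV[R]_d -> R)
  (T : 'rV[R]_d -> 'rV[R]_d) : Prop :=
  forall x y, N (T x - T y) <= N (x - y).

Definition FixT (R : realType) (d : nat) (T : 'rV[R]_d -> 'rV[R]_d) :
  set 'rV[R]_d := [set x | T x = x].

Definition distFix (R : realType) (d : nat) (N : 'rV[R]_d -> R)
  (T : 'rV[R]_d -> 'rV[R]_d) (x0 : 'rV[R]_d) : R :=
  inf [set N (x0 - y) | y in FixT T].

(* B_i^n = prod_{j=i}^n beta_j  (empty product = 1 when i > n). *)
Definition Bprod (R : realType) (beta : nat -> R) (i n : nat) : R :=
  \prod_(i <= j < n.+1) beta j.

Definition sigmaE (R : realType) (dT : measure_display) (Om : measurableType dT)
  (P : probability Om R) (d : nat) (N : 'rV[R]_d -> R)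
  (U : nat -> Om -> 'rV[R]_d) (n : nat) : \bar R :=
  (\int[P]_w (N (U n w))%:E)%E.

(* Main.v *)
Require Import Defs.
From HB Require Import structures.
From mathcomp Require Import all_boot all_order all_algebra.
From mathcomp Require Import all_classical all_reals all_analysis.
From mathcomp Require Import lra ring measurable_realfun.
Import Order.TTheory GRing.Theory Num.Theory.
Import numFieldNormedType.Exports.
Local Open Scope classical_set_scope.
Local Open Scope ring_scope.

Lemma le_integral_any d (Om : measurableType d) (R : realType)
  (mu : {measure set Om -> \bar R}) (f g : Om -> \bar R) :
  (forall w, 0 <= f w)%E -> (forall w, f w <= g w)%E ->
  (\int[mu]_w f w <= \int[mu]_w g w)%E.
Proof.
move=> f0 fg; have g0 : forall w, (0 <= g w)%E.
  by move=> w; exact: le_trans (f0 w) (fg w).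
rewrite (ge0_integralTE mu f0) (ge0_integralTE mu g0) /=.
apply: ereal_sup_le => _ [h hf <-]; exists h => //= w.
exact: le_trans (hf w) (fg w).
Qed.

Section norm.
Variables (R : realType) (d : nat) (N : 'rV[R]_d -> R).
Hypothesis hN : is_norm N.

Lemma N0 : N 0 = 0.
Proof. by case: hN => _ hs _; rewrite -(scale0r 0) hs normr0 mul0r. Qed.

Lemma NN v : N (- v) = N v.
Proof. by case: hN => _ hs _; rewrite -scaleN1r hs normrN normr1 mul1r. Qed.

Lemma Nge0 v : 0 <= N v.
Proof.
case: hN => _ _ ht; have := ht v (- v); rewrite subrr N0 NN.
by move=> h; lra.
Qed.

Lemma Nsym u v : N (u - v) = N (v - u).
Proof. by rewrite -(NN (u - v)) opprB. Qed.

Lemma Ntri u v : N (u + v) <= N u + N v.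
Proof. by case: hN. Qed.

Lemma Nscale a v : N (a *: v) = `|a| * N v.
Proof. by case: hN. Qed.

Lemma Nsum (I : Type) (s : seq I) (F : I -> 'rV[R]_d) :
  N (\sum_(i <- s) F i) <= \sum_(i <- s) N (F i).
Proof.
apply: (big_ind2 (fun a b => N a <= b)) => [|a x b y ha hb|i _]//.
  by rewrite N0.
by apply: le_trans (Ntri a b) _; exact: lerD.
Qed.

Lemma Ncoord u : N u <= \sum_(j < d) `|u 0 j| * N (delta_mx 0 j).
Proof.
rewrite {1}[u]row_sum_delta. apply: le_trans (Nsum _ _ _) _.
by apply: ler_sum => j _; rewrite Nscale.
Qed.

Lemma Nlip u q : N u <= N q + \sum_(j < d) `|u 0 j - q 0 j| * N (delta_mx 0 j).
Proof.
apply: le_trans (_ : N u <= N q + N (u - q)) _.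
  by have := Ntri q (u - q); rewrite [q + _]addrC subrK.
rewrite lerD2l.
by apply: le_trans (Ncoord _) _; apply: ler_sum => j _; rewrite !mxE.
Qed.


Lemma measurable_N d' (Om : measurableType d') (V : Om -> 'rV[R]_d) :
  (forall i, measurable_fun setT (fun w => V w ord0 i)) ->
  measurable_fun setT (fun w => (N (V w))%:E).
Proof.
move=> mV.
pose qk (k : nat) : 'rV[R]_d := map_mx ratr (odflt 0 (unpickle k) : 'rV[rat]_d).
pose g (k : nat) (v : 'rV[R]_d) :=
  N (qk k) + \sum_(j < d) `|v 0 j - qk k 0 j| * N (delta_mx 0 j).
apply: (@eq_measurable_fun _ _ _ _ setT (fun w => einfs (fun k => (g k (V w))%:E) 0%N)).
  move=> w _; set v := V w.
  rewrite /einfs /=.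
  apply/eqP; rewrite eq_le; apply/andP; split; last first.
    apply: le_ereal_inf_tmp => _ [k _ <-]; rewrite lee_fin; exact: Nlip.
  apply/lee_addgt0Pr => e e0.
  set K := \sum_(j < d) N (delta_mx 0 j).
  have K0 : 0 <= K by apply: sumr_ge0 => j _; exact: Nge0.
  pose del := e / (2 * K + 1).
  have K1 : 0 < 2 * K + 1 by lra.
  have del0 : 0 < del by rewrite divr_gt0.
  have hdel : del * (2 * K + 1) = e by rewrite /del mulfVK //; lra.
  have /choice [f hf] : forall j : 'I_d, exists r : rat,
      ratr r \in `](v 0 j - del), (v 0 j + del)[.
    move=> j; apply: rat_in_itvoo; lra.
  pose q : 'rV[rat]_d := \row_j f j.
  have hq : qk (pickle q) = map_mx ratr q by rewrite /qk pickleK.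
  have close : forall j, `|v 0 j - qk (pickle q) 0 j| <= del.
    move=> j; rewrite hq !mxE; have := hf j; rewrite in_itv /= => /andP[h1 h2].
    rewrite ler_norml; apply/andP; split; lra.
  have hS : \sum_(j < d) `|v 0 j - qk (pickle q) 0 j| * N (delta_mx 0 j) <= del * K.
    rewrite /K mulr_sumr; apply: ler_sum => j _.
    by apply: ler_wpM2r; [exact: Nge0 | exact: close].
  have hS' : \sum_(j < d) `|qk (pickle q) 0 j - v 0 j| * N (delta_mx 0 j) <= del * K.
    by under eq_bigr do rewrite distrC.
  apply: le_trans (ereal_inf_lbound _) _.
    by exists (pickle q).
  rewrite -EFinD lee_fin /g.
  have hN2 := Nlip (qk (pickle q)) v.
  nra.
apply: (measurable_fun_einfs (f := fun k w => (g k (V w))%:E)) => k.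
apply/measurable_EFinP; rewrite /g.
apply: measurable_funD; first exact: measurable_cst.
apply: measurable_sum => j.
apply: measurable_funM; last exact: measurable_cst.
apply: measurableT_comp; first exact: normr_measurable.
apply: measurable_funD; last exact: measurable_cst.
exact: mV.
Qed.

End norm.
Arguments N0 {R d N}.
Arguments NN {R d N}.
Arguments Nge0 {R d N}.
Arguments Nsym {R d N}.
Arguments Ntri {R d N}.
Arguments Nscale {R d N}.
Arguments Nsum {R d N}.
Arguments Ncoord {R d N}.
Arguments Nlip {R d N}.
Arguments measurable_N {R d N}.

Lemma combo_id (R : realType) (d : nat) (b : R) (a c u y : 'rV[R]_d) :
  (1 - b) *: a + b *: (c + u) - y = (1 - b) *: (a - y) + b *: (c - y) + b *: u.
Proof. by apply/rowP => j; rewrite !mxE; ring. Qed.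

Lemma BprodS (R : realType) (beta : nat -> R) i n : (i <= n.+1)%N ->
  Bprod beta i n.+1 = Bprod beta i n * beta n.+1.
Proof. by move=> h; rewrite /Bprod big_nat_recr. Qed.

Lemma Bprod_ge0 (R : realType) (beta : nat -> R) i n : (1 <= i)%N ->
  (forall n, (1 <= n)%N -> 0 < beta n < 1) -> 0 <= Bprod beta i n <= 1.
Proof.
move=> hi hb; rewrite /Bprod big_nat_cond; apply/andP; split.
  apply: prodr_ge0 => j /andP[/andP[hj _] _]; have := hb j (leq_trans hi hj).
  by case/andP => /ltW.
 apply: prodr_ile1 => j /andP[/andP[hj _] _].
by have /andP[h1 h2] := hb j (leq_trans hi hj); rewrite (ltW h1) (ltW h2).
Qed.

Lemma pointwise_bound (R : realType) (d : nat) (N : 'rV[R]_d -> R)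
  (T : 'rV[R]_d -> 'rV[R]_d)
  (beta : nat -> R) (x0 y : 'rV[R]_d) (u : nat -> 'rV[R]_d) (xs : nat -> 'rV[R]_d) :
  is_norm N -> nonexpansive N T -> T y = y ->
  (forall n, (1 <= n)%N -> 0 < beta n < 1) ->
  xs 0%N = x0 ->
  (forall n, (1 <= n)%N -> xs n = (1 - beta n) *: x0 + beta n *: (T (xs n.-1) + u n)) ->
  forall n, N (xs n - y) <= N (x0 - y) + \sum_(1 <= i < n.+1) Bprod beta i n * N (u i).
Proof.
move=> hN hT hy hb h0 hrec; elim => [|n IH].
  by rewrite big_geq // addr0 h0.
rewrite hrec // combo_id /=.
have /andP[b0 b1] := hb n.+1 isT.
rewrite big_nat_recr //=.
rewrite (eq_big_nat _ _ (F2 := fun i => Bprod beta i n * N (u i) * beta n.+1)); last first.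
  by move=> i /andP[_ hi]; rewrite BprodS ?(ltnW hi) // mulrAC.
rewrite -mulr_suml (_ : Bprod beta n.+1 n.+1 = beta n.+1); last by rewrite /Bprod big_nat1.
set S := \sum_(1 <= i < n.+1) _ in IH *.
have h1 := Ntri hN ((1 - beta n.+1) *: (x0 - y) + beta n.+1 *: (T (xs n) - y)) (beta n.+1 *: u n.+1).
have h2 := Ntri hN ((1 - beta n.+1) *: (x0 - y)) (beta n.+1 *: (T (xs n) - y)).
rewrite !(Nscale hN) in h1 h2.
have h3 := hT (xs n) y; rewrite hy in h3.
have e1 : `|1 - beta n.+1| = 1 - beta n.+1 by rewrite ger0_norm // subr_ge0 ltW.
have e2 : `|beta n.+1| = beta n.+1 by rewrite ger0_norm // ltW.
rewrite e1 e2 in h1 h2.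
have n1 := Nge0 hN (x0 - y).
have n2 := Nge0 hN (T (xs n) - y).
have n3 := Nge0 hN (u n.+1).
nra.
Qed.

Lemma int_bound (R : realType) (dT : measure_display) (Om : measurableType dT)
  (P : probability Om R) (c : R) (n : nat) (B : nat -> R) (G : nat -> Om -> R) :
  0 <= c -> (forall k, (1 <= k)%N -> 0 <= B k) ->
  (forall k, (1 <= k)%N -> measurable_fun setT (fun w => (G k w)%:E)) ->
  (forall k w, 0 <= G k w) ->
  (\int[P]_w (c + \sum_(1 <= k < n.+1) B k * G k w)%:E =
   c%:E + \sum_(1 <= k < n.+1) (B k)%:E * \int[P]_w (G k w)%:E)%E.
Proof.
move=> c0 B0 mG G0.
pose F k w := (if (1 <= k)%N then B k * G k w else 0)%:E.
have mF : forall k, measurable_fun setT (F k).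
  move=> k; have [hk|hk] := boolP (1 <= k)%N; rewrite /F ?hk ?(negbTE hk); last exact: measurable_cst.
  apply/measurable_EFinP; apply: measurable_funM; first exact: measurable_cst.
  exact/measurable_EFinP/mG.
have F0 : forall k w, (0 <= F k w)%E.
  move=> k w; have [hk|hk] := boolP (1 <= k)%N; rewrite /F ?hk ?(negbTE hk) lee_fin //.
  exact: mulr_ge0 (B0 _ hk) (G0 _ _).
transitivity (\int[P]_w (c%:E + \sum_(k <- index_iota 1 n.+1) F k w))%E.
  apply: eq_integral => w _; rewrite EFinD -sumEFin; congr (_ + _)%E.
  by apply: eq_big_nat => k /andP[hk _]; rewrite /F hk.
rewrite ge0_integralD //.
all: try exact: measurable_cst.
all: try exact: emeasurable_sum.
all: try (by move=> w _; rewrite lee_fin).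
all: try (by move=> w _; apply: sume_ge0 => k _).
have P1 : (P : {measure set Om -> \bar R}) setT = 1%E := probability_setT P.
rewrite integral_cst // P1.
rewrite mule1; congr (_ + _)%E.
rewrite ge0_integral_sum //.
apply: eq_big_nat => k /andP[hk _]; rewrite /F hk.
under eq_integral do rewrite EFinM.
rewrite ge0_integralZl_EFin //.
all: try (by move=> w _; rewrite lee_fin).
all: try exact: mG.
all: try exact: B0.
Qed.

Theorem lemma1 (R : realType) (d : nat) (N : 'rV[R]_d -> R)
  (T : 'rV[R]_d -> 'rV[R]_d)
  (dT : measure_display) (Om : measurableType dT) (P : probability Om R)
  (beta : nat -> R) (x0 : 'rV[R]_d)
  (U : nat -> Om -> 'rV[R]_d) (x : nat -> Om -> 'rV[R]_d) :
  is_norm N ->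
  nonexpansive N T ->
  FixT T !=set0 ->
  (forall n, (1 <= n)%N -> 0 < beta n < 1) ->
  (forall n m, (1 <= n)%N -> (n <= m)%N -> beta n <= beta m) ->
  beta @ \oo --> (1 : R) ->
  (* the noise U_n (n >= 1): random vectors with E(U_n) = 0 and E ||U_n|| < oo *)
  (forall n, (1 <= n)%N -> forall i : 'I_d,
     measurable_fun setT (fun w => U n w ord0 i)) ->
  (forall n, (1 <= n)%N -> forall i : 'I_d,
     P.-integrable setT (fun w => (U n w ord0 i)%:E)) ->
  (forall n, (1 <= n)%N -> forall i : 'I_d,
     (\int[P]_w (U n w ord0 i)%:E = 0)%E) ->
  (forall n, (1 <= n)%N -> (sigmaE P N U n < +oo)%E) ->
  (* the iteration *)
  (forall w, x 0%N w = x0) ->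
  (forall n w, (1 <= n)%N ->
     x n w = (1 - beta n) *: x0 + beta n *: (T (x n.-1 w) + U n w)) ->
  (* (i) *)
  (forall M : R, 0 < M -> (forall y, N (T y) <= M) ->
     (ereal_sup [set (\int[P]_w (N (T (x n w) - x0))%:E)%E | n in [set: nat]]
        <= (M + N x0)%:E)%E) /\
  (* (ii) *)
  (let S := ereal_sup [set (\sum_(1 <= i < n.+1)
                              ((Bprod beta i n)%:E * sigmaE P N U i))%E
                       | n in [set n | (1 <= n)%N]] in
   (S < +oo)%E ->
   (ereal_sup [set (\int[P]_w (N (T (x n w) - x0))%:E)%E | n in [set: nat]]
      <= (2 * distFix N T x0)%:E + S)%E) /\
  ((\sum_(1 <= n <oo) sigmaE P N U n < +oo)%E ->
   (ereal_sup [set (\int[P]_w (N (T (x n w) - x0))%:E)%E | n in [set: nat]]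
      < +oo)%E).
Proof.
move=> hN hT [y0 hy0] hb hmono hlim mU iU EU sfin hx0 hrec.
have mNU : forall i, (1 <= i)%N -> measurable_fun setT (fun w => (N (U i w))%:E).
  by move=> i hi; apply: (measurable_N hN) => j; exact: mU.
have sig0 : forall i, (0 <= sigmaE P N U i)%E.
  by move=> i; apply: integral_ge0 => w _; rewrite lee_fin (Nge0 hN).
have key : forall y, T y = y -> forall n,
  (\int[P]_w (N (T (x n w) - x0))%:E <= (2 * N (x0 - y))%:E +
     \sum_(1 <= i < n.+1) ((Bprod beta i n)%:E * sigmaE P N U i))%E.
  move=> y hy n.
  apply: le_trans (@le_integral_any _ _ _ P _ (fun w => (2 * N (x0 - y) +
     \sum_(1 <= i < n.+1) Bprod beta i n * N (U i w))%:E) _ _) _.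
  - by move=> w; rewrite lee_fin (Nge0 hN).
  - move=> w; rewrite lee_fin.
    have hp := @pointwise_bound _ _ N T beta x0 y (fun i => U i w) (fun m => x m w)
      hN hT hy hb (hx0 w) (fun m hm => hrec m w hm) n.
    have h1 := Ntri hN (T (x n w) - y) (y - x0).
    have h2 := hT (x n w) y; rewrite hy in h2.
    rewrite (Nsym hN y x0) in h1.
    have -> : T (x n w) - x0 = T (x n w) - y + (y - x0).
      by rewrite addrA subrK.
    lra.
  rewrite int_bound //.
  - by rewrite mulr_ge0 // (Nge0 hN).
  - by move=> k hk; have /andP[] := @Bprod_ge0 _ beta k n hk hb.
  - by move=> k w; exact: (Nge0 hN).
split.
  move=> M M0 hM; apply: ge_ereal_sup => _ [n _ <-].
  apply: le_trans (@le_integral_any _ _ _ P _ (fun w => (M + N x0)%:E) _ _) _.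
  - by move=> w; rewrite lee_fin (Nge0 hN).
  - move=> w; rewrite lee_fin.
    have h1 := Ntri hN (T (x n w)) (- x0); rewrite (NN hN) in h1.
    have := hM (x n w); lra.
  have P1 : (P : {measure set Om -> \bar R}) setT = 1%E := probability_setT P.
  by rewrite integral_cst // P1 mule1.
have elt0 : forall n,
    (0 <= \sum_(1 <= i < n.+1) ((Bprod beta i n)%:E * sigmaE P N U i))%E.
  move=> n; rewrite big_nat_cond; apply: sume_ge0 => i /andP[/andP[hi _] _].
  apply: mule_ge0 => //; rewrite lee_fin.
  by have /andP[] := @Bprod_ge0 _ beta i n hi hb.
split.
  move=> S hS.
  have S0 : (0 <= S)%E.
    apply: le_trans (elt0 1%N) _; apply: ereal_sup_ubound; by exists 1%N.
  have eltS : forall n,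
      (\sum_(1 <= i < n.+1) ((Bprod beta i n)%:E * sigmaE P N U i) <= S)%E.
    case=> [|n]; first by rewrite big_geq.
    by apply: ereal_sup_ubound; exists n.+1.
  have Sf : S \is a fin_num by rewrite ge0_fin_numE.
  set s := fine S; have Ss : S = s%:E by rewrite /s fineK.
  apply: ge_ereal_sup => _ [n _ <-].
  set I := (\int[P]_w _)%E.
  have I0 : (0 <= I)%E by apply: integral_ge0 => w _; rewrite lee_fin (Nge0 hN).
  have Ib : forall y, T y = y -> (I <= (2 * N (x0 - y) + s)%:E)%E.
    move=> y hy; apply: le_trans (key y hy n) _; rewrite EFinD -Ss.
    exact: leeD2l (eltS n).
  have If : I \is a fin_num.
    by rewrite ge0_fin_numE //; apply: le_lt_trans (Ib y0 hy0) _; exact: ltry.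
  rewrite Ss -EFinD -(fineK If) lee_fin.
  have : (fine I - s) / 2 <= distFix N T x0.
    apply: lb_le_inf; first by exists (N (x0 - y0)); exists y0.
    move=> _ [y hy <-]; have := Ib y hy; rewrite -(fineK If) lee_fin => h.
    rewrite ler_pdivrMr //; lra.
  rewrite ler_pdivrMr //; lra.
move=> hsum.
apply: (@le_lt_trans _ _ ((2 * N (x0 - y0))%:E + \sum_(1 <= n <oo) sigmaE P N U n)%E).
  apply: ge_ereal_sup => _ [n _ <-]; apply: le_trans (key y0 hy0 n) _.
  apply: leeD2l.
  have := @nneseries_lim_ge R (sigmaE P N U) xpredT 1%N n.+1 (fun i _ _ => sig0 i).
  apply: le_trans.
  rewrite big_nat_cond [X in (_ <= X)%E]big_nat_cond; apply: lee_sum => i /andP[/andP[hi _] _].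
  have /andP[B0 B1] := @Bprod_ge0 _ beta i n hi hb.
  by apply: gee_pMl => //; rewrite lee_fin.
by apply: lte_add_pinfty => //; exact: ltry.
Qed.
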